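(* Let $\ell\ge1$ and $V=\prod_{j=\ell,\dots,2,1}(c_1x^jy^jc_2)^2$. If $C$ is an accepting computation of $V$ and at some point during $C$ the queue contains two full $x$-blocks (respectively, two full $y$-blocks), then at some later point during $C$ the queue contains two full $y$-blocks (respectively, two full $x$-blocks).
   Context: Queue automaton: a configuration is written $Q\,\|\,x$ ($Q$ = queue contents, $x$ = remaining input); a step from $Q\,\|\,\sigma x$ ($\sigma$ a symbol) goes either to $Q\sigma\,\|\,x$ (push the input symbol) or, if $Q=\sigma Q'$, to $Q'\,\|\,x$ (the input symbol is matched against the leftmost queue symbol, which is popped; that queue symbol was pushed from an earlier input position and the two occurrences are said to be matched). An accepting computation of $w$ is a computation $\varepsilon\,\|\,w\vdash^*\varepsilon\,\|\,\varepsilon$ ($\varepsilon$ the empty string). Here $c_1,c_2,x,y$ are four distinct symbols and $V=v_\ell v_\ell v_{\ell-1}v_{\ell-1}\cdots v_1v_1$ with $v_j=c_1x^jy^jc_2$. Each displayed subword $x^j$ of $V$ is an $x$-block and each displayed $y^j$ a $y$-block. At a given point of a computation, the queue contains a full $x$-block (resp. $y$-block) if the entire block $x^j$ (resp. $y^j$) of $V$ has been pushed onto the queue, with none of its symbols matched when read, and none of its symbols has yet been popped. *)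

(* Defs.v *)
From HB Require Import structures.
From mathcomp Require Import all_boot.
Set Implicit Arguments. Unset Strict Implicit. Unset Printing Implicit Defensive.

Inductive sym := c1 | c2 | sx | sy.
Definition sym_eqb (a b : sym) : bool :=
  match a, b with
  | c1, c1 | c2, c2 | sx, sx | sy, sy => true | _, _ => false end.
Lemma sym_eqP : Equality.axiom sym_eqb.
Proof. by case; case; constructor. Qed.
HB.instance Definition _ := hasDecEq.Build sym sym_eqP.

(* Each letter of V is tagged with the block it belongs to:
   Some (j, c) means it lies in the x-block (if the letter is x) or the
   y-block (if the letter is y) of the c-th copy (c = 0 or 1) of v_j. *)
Definition tletter := (sym * option (nat * nat))%type.

Definition vt (j c : nat) : seq tletter :=
  [:: (c1, None)] ++ nseq j (sx, Some (j, c)) ++ nseq j (sy, Some (j, c))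
  ++ [:: (c2, None)].

Definition VT (l : nat) : seq tletter :=
  flatten [seq vt j 0 ++ vt j 1 | j <- rev (iota 1 l)].

Definition V (l : nat) : seq sym := map fst (VT l).

(* The queue is recorded as the list of input positions
   whose symbols were pushed (the queue word is the list of these symbols).
   At step k (reading w_k), choice true = push w_k, false = match w_k against
   the leftmost queue symbol and pop it.  None = the step is impossible. *)
Definition step (w : seq sym) (Q : option (seq nat)) (k : nat) (b : bool)
  : option (seq nat) :=
  match Q with
  | None => None
  | Some q =>
      if b then Some (rcons q k)
      else match q with
           | p :: q' => if nth c1 w p == nth c1 w k then Some q' else None
           | [::] => None
           end
  end.

Fixpoint queue_at (w : seq sym) (cs : seq bool) (k : nat) : option (seq nat) :=
  match k with
  | 0 => Some [::]
  | k'.+1 => step w (queue_at w cs k') k' (nth false cs k')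
  end.

Definition accepting (w : seq sym) (cs : seq bool) : Prop :=
  size cs = size w /\ queue_at w cs (size w) = Some [::].

Definition full_block (l : nat) (q : seq nat) (kind : sym) (b : nat * nat) : Prop :=
  (exists i, i < size (VT l) /\ nth (c1, None) (VT l) i = (kind, Some b)) /\
  (forall i, i < size (VT l) -> nth (c1, None) (VT l) i = (kind, Some b) -> i \in q).

Definition two_full (l : nat) (q : seq nat) (kind : sym) : Prop :=
  exists b1 b2, b1 <> b2 /\ full_block l q kind b1 /\ full_block l q kind b2.

(* Main.v *)
Require Import Defs.
From mathcomp Require Import all_boot zify.
From Stdlib Require Import Lia.

Definition x0 : tletter := (c1, None).

Lemma VT_S l : VT l.+1 = (vt l.+1 0 ++ vt l.+1 1) ++ VT l.
Proof.
rewrite /VT -(addn1 l) iotaD rev_cat map_cat flatten_cat.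
rewrite add1n addn1. by rewrite /rev /= cats0.
Qed.

Lemma size_vt j c : size (vt j c) = (2 * j + 2).
Proof. rewrite /vt !size_cat !size_nseq /=. lia. Qed.

Fixpoint off (l j c : nat) : nat :=
  match l with
  | 0 => 0
  | l'.+1 => if j == l'.+1 then c * (2 * j + 2) else 2 * (2 * l'.+1 + 2) + off l' j c
  end.

Lemma nth_off l j c t : 1 <= j <= l -> c < 2 -> t < 2 * j + 2 ->
  off l j c + t < size (VT l) /\ nth x0 (VT l) (off l j c + t) = nth x0 (vt j c) t.
Proof.
elim: l => [|l IH] /= Hj Hc Ht; first lia.
rewrite VT_S size_cat nth_cat size_cat !size_vt.
case: eqP => [->|Hne].
- clear IH; case: c Hc => [|[|c]] // _.
  + rewrite mul0n add0n; split; first lia.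
    rewrite ifT; last lia. rewrite nth_cat size_vt ifT //; lia.
  + rewrite mul1n; split; first lia.
    rewrite ifT; last lia. rewrite nth_cat size_vt ifF; last lia.
    congr nth; lia.
- have [H1 H2] := IH ltac:(lia) Hc Ht.
  split; first lia.
  rewrite ifF; last lia. rewrite -H2; congr nth; lia.
Qed.

Lemma dec_pos l i : i < size (VT l) ->
  exists j c t, [/\ 1 <= j <= l, c < 2, t < 2 * j + 2 & i = off l j c + t].
Proof.
elim: l i => [|l IH] i; first by [].
rewrite VT_S size_cat size_cat !size_vt => Hi.
case: (ltnP i (2 * l.+1 + 2)) => H1.
  exists l.+1, 0, i; split => //; [lia|]. simpl; rewrite eqxx; lia.
case: (ltnP i (2 * (2 * l.+1 + 2))) => H2.
  exists l.+1, 1, (i - (2 * l.+1 + 2)); split => //; [lia|lia|]. simpl; rewrite eqxx; lia.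
have [j [c [t [Hj Hc Ht E]]]] := IH (i - 2 * (2 * l.+1 + 2)) ltac:(lia).
exists j, c, t; split => //; first lia.
simpl; rewrite ifF; [lia|apply/eqP; lia].
Qed.

Definition prec j c j' c' := j' < j \/ (j = j' /\ c < c').

Lemma off_order l j c j' c' t : 1 <= j <= l -> 1 <= j' <= l -> c < 2 -> c' < 2 ->
  t < 2 * j + 2 -> prec j c j' c' -> off l j c + t < off l j' c'.
Proof.
rewrite /prec.
elim: l => [|l IH] /= Hj Hj' Hc Hc' Ht Hp; first lia.
case: eqP => [E|NE]; case: eqP => [E'|NE'].
- clear IH; subst. case: c Hc Hp => [|[|]]; case: c' Hc' => [|[|]]; lia.
- clear IH; case: c Hc Hp => [|[|]] // *; lia.
- lia.
- have := IH ltac:(lia) ltac:(lia) Hc Hc' Ht Hp. lia.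
Qed.

Lemma pos_cmp l j c t j' c' t' : 1 <= j <= l -> 1 <= j' <= l -> c < 2 -> c' < 2 ->
  t < 2 * j + 2 -> t' < 2 * j' + 2 -> (j, c) <> (j', c') ->
  off l j c + t < off l j' c' + t' -> prec j c j' c'.
Proof.
move=> Hj Hj' Hc Hc' Ht Ht' Hne Hlt.
rewrite /prec.
case: (ltngtP j j') => [Hjj|Hjj|Hjj]; [|lia|].
- have := @off_order l j' c' j c t' Hj' Hj Hc' Hc Ht' ltac:(rewrite /prec; lia). lia.
- subst j'. case: (ltngtP c c') => [|Hcc|Hcc]; [lia| |by subst].
  have := @off_order l j c' j c t' Hj' Hj Hc' Hc Ht' ltac:(rewrite /prec; lia). lia.
Qed.

Definition lo (k : sym) (j : nat) := if k is sx then 1 else j.+1.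

Lemma nth_vt_tag j c t k b : t < 2 * j + 2 -> nth x0 (vt j c) t = (k, Some b) ->
  b = (j, c) /\ ((k = sx /\ 1 <= t <= j) \/ (k = sy /\ j < t <= 2 * j)).
Proof.
rewrite /vt /= => Ht.
case: t Ht => [|t] Ht //=.
rewrite nth_cat size_nseq.
case: ltnP => H1.
  rewrite nth_nseq H1 => -[<- <-]; split => //; left; split => //; lia.
rewrite nth_cat size_nseq.
case: ltnP => H2.
  rewrite nth_nseq H2 => -[<- <-]; split => //; right; split => //; lia.
have -> : t - j - j = 0 by lia. by [].
Qed.

Lemma nth_vt_sym j c t k : t < 2 * j + 2 -> (nth x0 (vt j c) t).1 = k -> (k = sx \/ k = sy) ->
  lo k j <= t < lo k j + j.
Proof.
rewrite /vt /= => Ht.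
case: t Ht => [|t] Ht /=; first by move=> <- [].
rewrite nth_cat size_nseq.
case: ltnP => H1.
  rewrite nth_nseq H1 /= => <- _ /=; lia.
rewrite nth_cat size_nseq.
case: ltnP => H2.
  rewrite nth_nseq H2 /= => <- _ /=; lia.
have -> : t - j - j = 0 by lia. by move=> <- [].
Qed.

Lemma nth_vt_enc j c t k : (k = sx \/ k = sy) -> lo k j <= t < lo k j + j ->
  t < 2 * j + 2 /\ nth x0 (vt j c) t = (k, Some (j, c)).
Proof.
move=> Hk Ht.
have Ht2 : t < 2 * j + 2 by move: Ht; case: Hk => -> /=; lia.
split => //.
rewrite /vt /=.
case: t Ht Ht2 => [|t] Ht Ht2; first by case: Hk Ht => -> /=; lia.
rewrite /= nth_cat size_nseq.
case: Hk Ht => -> /= Ht.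
  by rewrite ifT ?nth_nseq ?ifT //; lia.
rewrite ifF; last lia. rewrite nth_cat size_nseq ifT; last lia.
by rewrite nth_nseq ifT //; lia.
Qed.

Lemma lo_bound k j t : (k = sx \/ k = sy) -> lo k j <= t < lo k j + j -> 1 <= t /\ t < 2 * j + 2.
Proof. by case => ->; rewrite /lo; lia. Qed.

Lemma tag_enc l j c t k : (k = sx \/ k = sy) -> 1 <= j <= l -> c < 2 ->
  lo k j <= t < lo k j + j ->
  off l j c + t < size (VT l) /\ nth x0 (VT l) (off l j c + t) = (k, Some (j, c)).
Proof.
move=> Hk Hj Hc Ht.
have [Ht1 Ht2] := nth_vt_enc j c t k Hk Ht.
have [H1 H2] := nth_off l j c t Hj Hc Ht1.
by rewrite H2.
Qed.

Lemma tag_dec l i k b : i < size (VT l) -> nth x0 (VT l) i = (k, Some b) ->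
  [/\ (k = sx \/ k = sy), 1 <= b.1 <= l, b.2 < 2 &
   exists t, lo k b.1 <= t < lo k b.1 + b.1 /\ i = off l b.1 b.2 + t].
Proof.
move=> Hi Hn.
have [j [c [t [Hj Hc Ht E]]]] := dec_pos l i Hi.
have [_ H2] := nth_off l j c t Hj Hc Ht.
rewrite -E Hn in H2.
have [Eb Hk] := nth_vt_tag j c t k b Ht (esym H2).
subst b => /=.
split => //.
  by case: Hk => -[-> _]; [left|right].
exists t; split => //.
by case: Hk => -[-> H]; rewrite /lo; lia.
Qed.

Lemma sym_dec l i k : i < size (VT l) -> (nth x0 (VT l) i).1 = k -> (k = sx \/ k = sy) ->
  exists j c t, [/\ 1 <= j <= l, c < 2, lo k j <= t < lo k j + j & i = off l j c + t].
Proof.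
move=> Hi Hn Hk.
have [j [c [t [Hj Hc Ht E]]]] := dec_pos l i Hi.
have [_ H2] := nth_off l j c t Hj Hc Ht.
rewrite E H2 in Hn.
exists j, c, t; split => //.
exact: nth_vt_sym j c t k Ht Hn Hk.
Qed.

Definition other (k k' : sym) := (k, k') = (sx, sy) \/ (k, k') = (sy, sx).

Lemma between l k k' jA cA tA jB cB tB : other k k' ->
  1 <= jA <= l -> cA < 2 -> lo k jA <= tA < lo k jA + jA ->
  1 <= jB <= l -> cB < 2 -> lo k jB <= tB < lo k jB + jB ->
  (jA, cA) <> (jB, cB) -> off l jA cA + tA < off l jB cB + tB ->
  exists jY cY, [/\ 1 <= jY <= l, cY < 2 &
    forall t, lo k' jY <= t < lo k' jY + jY ->
      off l jA cA + tA < off l jY cY + t < off l jB cB + tB].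
Proof.
move=> Ho HjA HcA HtA HjB HcB HtB Hne Hlt.
have HkX : k = sx \/ k = sy by case: Ho => -[-> _]; [left|right].
have [_ HtA2] := lo_bound k jA tA HkX HtA.
have [_ HtB2] := lo_bound k jB tB HkX HtB.
have Hp := pos_cmp l jA cA tA jB cB tB HjA HjB HcA HcB HtA2 HtB2 Hne Hlt.
case: Ho => -[Ek Ek']; subst k k'; rewrite /lo in HtA HtB *.
- exists jA, cA; split => // t Ht.
  have := @off_order l jA cA jB cB t HjA HjB HcA HcB ltac:(lia) Hp. lia.
- exists jB, cB; split => // t Ht.
  have := @off_order l jA cA jB cB tA HjA HjB HcA HcB HtA2 Hp. lia.
Qed.

Section Queue.
Variable (w : seq sym) (cs : seq bool).

Definition pu u := nth false cs u.
Fixpoint ne u := match u with 0 => 0 | u'.+1 => ne u' + pu u' end.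
Fixpoint nd u := match u with 0 => 0 | u'.+1 => nd u' + ~~ pu u' end.
Definition Pu u := [seq i <- iota 0 u | pu i].

Lemma Pu_S u : Pu u.+1 = Pu u ++ (if pu u then [:: u] else [::]).
Proof. by rewrite /Pu -addn1 iotaD filter_cat /=. Qed.

Lemma size_Pu u : size (Pu u) = ne u.
Proof.
elim: u => [|u IH] //. rewrite Pu_S size_cat IH /=. by case: (pu u).
Qed.

Lemma nth_Pu u m : m < ne u ->
  [/\ nth 0 (Pu u) m < u, pu (nth 0 (Pu u) m) & ne (nth 0 (Pu u) m) = m].
Proof.
elim: u => [|u IH] //= Hm.
rewrite Pu_S nth_cat size_Pu.
case: (ltnP m (ne u)) => H.
  have [H1 H2 H3] := IH H. split => //. lia.
move: Hm; case E: (pu u) => /= Hm; last lia.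
have -> : m - ne u = 0 by lia.
split => //=; lia.
Qed.

Lemma ne_mono u u' : u <= u' -> ne u <= ne u'.
Proof. elim: u' => [|u' IH] H; first by rewrite leqn0 in H; move/eqP: H => ->.
case: (ltngtP u u'.+1) H => // [H|-> //] _. have := IH ltac:(lia). simpl. lia. Qed.

Lemma nd_mono u u' : u <= u' -> nd u <= nd u'.
Proof. elim: u' => [|u' IH] H; first by rewrite leqn0 in H; move/eqP: H => ->.
case: (ltngtP u u'.+1) H => // [H|-> //] _. have := IH ltac:(lia). simpl. lia. Qed.

Lemma nd_lip u u' : u <= u' -> nd u' <= nd u + (u' - u).
Proof. elim: u' => [|u' IH] H; first by rewrite leqn0 in H; move/eqP: H => ->.
case: (ltngtP u u'.+1) H => // [H|-> //] _; last lia.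
have := IH ltac:(lia). simpl. case: (pu u') => /=; lia. Qed.

Lemma ne_push p : pu p -> ne p.+1 = (ne p).+1.
Proof. by move=> /= ->; rewrite addn1. Qed.

Lemma nd_pop p : ~~ pu p -> nd p.+1 = (nd p).+1.
Proof. by move=> /= ->; rewrite addn1. Qed.

Lemma ne_lt p p' : pu p -> p < p' -> ne p < ne p'.
Proof. move=> Hp Hlt. have := ne_mono p.+1 p' Hlt. rewrite ne_push //. Qed.

Lemma nd_lt p p' : ~~ pu p -> p < p' -> nd p < nd p'.
Proof. move=> Hp Hlt. have := nd_mono p.+1 p' Hlt. rewrite nd_pop //. Qed.

Lemma ne_inj p p' : pu p -> pu p' -> ne p = ne p' -> p = p'.
Proof.
move=> Hp Hp' E. case: (ltngtP p p') => // H.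
- have := ne_lt p p' Hp H. lia.
- have := ne_lt p' p Hp' H. lia.
Qed.

Lemma queue_inv u q : queue_at w cs u = Some q -> nd u <= ne u /\ q = drop (nd u) (Pu u).
Proof.
elim: u q => [|u IH] q /=; first by case => <-.
case E: (queue_at w cs u) => [q0|] //=.
have [Hd Hq0] := IH q0 E.
rewrite Pu_S -/(pu u).
case Hpu: (pu u) => /=.
- case=> <-. rewrite !addn0 addn1; split; first lia.
  rewrite drop_cat size_Pu. case: ltnP => H.
    by rewrite Hq0 -cats1.
  have -> : nd u = ne u by lia.
  by rewrite Hq0 drop_oversize // ?size_Pu ?subnn ?drop0.
- rewrite ?cats0 ?addn0 ?addn1.
  case: q0 E Hq0 => [|p q'] // E Hq0.
  case: eqP => // _ [<-].
  have Hsz : nd u < size (Pu u).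
    rewrite ltnNge; apply/negP => H. by rewrite drop_oversize in Hq0.
  rewrite size_Pu in Hsz. split; first lia.
  rewrite (drop_nth 0) ?size_Pu // in Hq0. by case: Hq0.
Qed.

Lemma queue_none u i : queue_at w cs u = None -> queue_at w cs (u + i) = None.
Proof. elim: i => [|i IH]; first by rewrite addn0. by rewrite addnS /= => /IH ->. Qed.

Lemma queue_some u n : u <= n -> queue_at w cs n = Some [::] -> exists q, queue_at w cs u = Some q.
Proof.
move=> H Hn. case E: (queue_at w cs u) => [q|]; first by exists q.
have := queue_none u (n - u) E. by rewrite subnKC // Hn.
Qed.

Lemma queue_mem u q p : queue_at w cs u = Some q ->
  (p \in q) <-> [/\ p < u, pu p & nd u <= ne p].
Proof.
move=> /queue_inv [Hd ->]. split.
- move/(nthP 0) => [i Hi <-].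
  rewrite size_drop size_Pu in Hi.
  rewrite nth_drop.
  have [H1 H2 H3] := nth_Pu u (nd u + i) ltac:(lia).
  split => //. by rewrite H3 leq_addr.
- move=> [H1 H2 H3].
  have Hlt : ne p < ne u by exact: ne_lt.
  have [G1 G2 G3] := nth_Pu u (ne p) Hlt.
  have E : nth 0 (Pu u) (ne p) = p by apply: ne_inj.
  apply/(nthP 0). exists (ne p - nd u).
    rewrite size_drop size_Pu. lia.
  rewrite nth_drop. have -> : nd u + (ne p - nd u) = ne p by lia. exact: E.
Qed.

Lemma accept_eq n : queue_at w cs n = Some [::] -> nd n = ne n.
Proof.
move/queue_inv => [Hd Hq].
have : size (drop (nd n) (Pu n)) = 0 by rewrite -Hq.
rewrite size_drop size_Pu. lia.
Qed.

Lemma pop_match n u : u < n -> queue_at w cs n = Some [::] -> ~~ pu u ->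
  exists p, [/\ p < u, pu p, ne p = nd u & nth c1 w p = nth c1 w u].
Proof.
move=> Hu Hn Hp.
have [q Hq] := queue_some u.+1 n Hu Hn.
have /= := Hq.
case E: (queue_at w cs u) => [q0|] //=.
have [Hd Hq0] := queue_inv u q0 E.
rewrite -/(pu u) (negbTE Hp).
case: q0 E Hq0 => [|p q'] // E Hq0.
case: eqP => // Hsym _.
have Hsz : nd u < size (Pu u).
  rewrite ltnNge; apply/negP => H. by rewrite drop_oversize in Hq0.
rewrite (drop_nth 0) // in Hq0. case: Hq0 => Ep _.
rewrite size_Pu in Hsz.
have [H1 H2 H3] := nth_Pu u (nd u) Hsz.
exists p. rewrite Ep. split => //. by rewrite -Ep.
Qed.

Lemma pop_exists N m : m < nd N -> exists u, [/\ u < N, ~~ pu u & nd u = m].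
Proof.
elim: N => [|N IH] //= Hm.
case: (ltnP m (nd N)) => H.
  have [u [H1 H2 H3]] := IH H. exists u; split => //. lia.
move: Hm; case E: (pu N) => /= Hm; first lia.
exists N; split => //; [by rewrite E|lia].
Qed.

End Queue.

Lemma size_V l : size (V l) = size (VT l).
Proof. by rewrite size_map. Qed.

Lemma symV l i : i < size (VT l) -> nth c1 (V l) i = (nth x0 (VT l) i).1.
Proof. move=> H. by rewrite /V (nth_map x0). Qed.

Lemma sym_enc l j c t k : (k = sx \/ k = sy) -> 1 <= j <= l -> c < 2 ->
  lo k j <= t < lo k j + j -> off l j c + t < size (V l) /\ nth c1 (V l) (off l j c + t) = k.
Proof.
move=> Hk Hj Hc Ht. have [H1 H2] := tag_enc l j c t k Hk Hj Hc Ht.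
by rewrite size_V symV // H2.
Qed.

Section Main.
Variables (l : nat) (cs : seq bool) (kd kd' : sym) (k : nat) (q : seq nat).
Hypothesis Ho : other kd kd'.
Hypothesis Hfin : queue_at (V l) cs (size (V l)) = Some [::].
Hypothesis Hq : queue_at (V l) cs k = Some q.

Lemma HkX : kd = sx \/ kd = sy.
Proof. by case: Ho => -[-> _]; [left|right]. Qed.
Lemma HkX' : kd' = sx \/ kd' = sy.
Proof. by case: Ho => -[_ ->]; [right|left]. Qed.
Lemma Hkk : kd <> kd'.
Proof. by case: Ho => -[-> ->]. Qed.

Definition inq j c := forall t, lo kd j <= t < lo kd j + j -> off l j c + t \in q.
Definition st j c := off l j c + lo kd j.

Lemma blk j c : 1 <= j <= l -> c < 2 -> inq j c ->
  forall i, i < j -> [/\ st j c + i < k, pu cs (st j c + i),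
     nd cs k <= ne cs (st j c + i) & ne cs (st j c + i) = ne cs (st j c) + i].
Proof.
move=> Hj Hc HB.
have mem : forall i, i < j -> [/\ st j c + i < k, pu cs (st j c + i) &
     nd cs k <= ne cs (st j c + i)].
  move=> i Hi. apply/(queue_mem (V l) cs k q _ Hq). rewrite /st -addnA. apply: HB.
  clear -Hi; lia.
elim => [|i IH] Hi.
  have [A B C] := mem 0 Hi. split => //. by rewrite !addn0.
have [A B C] := mem i.+1 Hi. split => //.
have [_ B' _ D'] := IH (ltnW Hi).
by rewrite addnS ne_push // D' addnS.
Qed.

Lemma popB j c : 1 <= j <= l -> c < 2 -> inq j c ->
  forall u, u < size (V l) -> ~~ pu cs u -> ne cs (st j c) <= nd cs u < ne cs (st j c) + j ->
  nth c1 (V l) u = kd.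
Proof.
move=> Hj Hc HB u Hu Hpu Hr.
have [p [P1 P2 P3 P4]] := pop_match (V l) cs (size (V l)) u Hu Hfin Hpu.
have Hi : nd cs u - ne cs (st j c) < j by clear -Hr; lia.
have [_ C2 _ C4] := blk j c Hj Hc HB _ Hi.
have Ep : p = st j c + (nd cs u - ne cs (st j c)).
  apply: (ne_inj cs) => //. rewrite C4 P3; clear -Hr; lia.
apply: (etrans (esym P4)). rewrite Ep /st -addnA.
by have [_ ->] := sym_enc l j c (lo kd j + (nd cs u - ne cs (st j c))) kd HkX Hj Hc ltac:(clear -Hi; lia).
Qed.

Lemma after j2 cB : 1 <= j2 <= l -> cB < 2 -> inq j2 cB ->
  forall jX cX tX, 1 <= jX <= l -> cX < 2 -> lo kd jX <= tX < lo kd jX + jX ->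
   k <= off l jX cX + tX -> prec j2 cB jX cX.
Proof.
move=> Hj2 HcB HB jX cX tX HjX HcX HtX Hk.
have [_ Ht2] := lo_bound kd jX tX HkX HtX.
have [_ Hl2] := lo_bound kd j2 (lo kd j2) HkX ltac:(clear -Hj2; lia).
have [A _ _ _] := blk j2 cB Hj2 HcB HB j2.-1 ltac:(clear -Hj2; lia).
have Hne : (j2, cB) <> (jX, cX).
  move=> [E1 E2]; subst jX cX. move: A Hk HtX; rewrite /st. clear; lia.
apply: (pos_cmp l j2 cB (lo kd j2) jX cX tX) => //.
have [A' _ _ _] := blk j2 cB Hj2 HcB HB 0 ltac:(clear -Hj2; lia).
move: A' Hk; rewrite /st. clear; lia.
Qed.

Lemma popk m : nd cs k <= m -> m < nd cs (size (V l)) ->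
  exists u, [/\ u < size (V l), ~~ pu cs u, nd cs u = m & k <= u].
Proof.
move=> H1 H2. have [u [U1 U2 U3]] := pop_exists cs (size (V l)) m H2.
exists u; split => //. rewrite leqNgt; apply/negP => H.
have := nd_lt cs u k U2 H. clear -H1 U3; lia.
Qed.

Lemma symd u j c : 1 <= j <= l -> c < 2 -> inq j c ->
  u < size (V l) -> ~~ pu cs u -> ne cs (st j c) <= nd cs u < ne cs (st j c) + j ->
  exists jX cX tX, [/\ 1 <= jX <= l, cX < 2, lo kd jX <= tX < lo kd jX + jX & u = off l jX cX + tX].
Proof.
move=> Hj Hc HB Hu Hpu Hr.
have Hs := popB j c Hj Hc HB u Hu Hpu Hr.
apply: sym_dec => //; last exact: HkX. by rewrite -size_V. by rewrite -symV -?size_V.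
Qed.

Lemma push_between j c u1 u2 u : 1 <= j <= l -> c < 2 -> inq j c ->
  nd cs u1 = ne cs (st j c) -> nd cs u2 = ne cs (st j c) + j.-1 -> ~~ pu cs u1 ->
  u1 < u < u2 -> u < size (V l) -> nth c1 (V l) u = kd' -> pu cs u.
Proof.
move=> Hj Hc HB E1 E2 Hp1 Hu Hn Hs.
apply/negPn/negP => Hpu.
have := nd_mono cs u1.+1 u ltac:(clear -Hu; lia). rewrite nd_pop // => G1.
have := nd_mono cs u u2 ltac:(clear -Hu; lia) => G2.
have := popB j c Hj Hc HB u Hn Hpu ltac:(clear -G1 G2 E1 E2 Hj; lia).
rewrite Hs => E. by apply: Hkk.
Qed.

Lemma same_block jX cX t t' u u' : (lo kd jX <= t < lo kd jX + jX) -> (lo kd jX <= t' < lo kd jX + jX) ->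
  u = off l jX cX + t -> u' = off l jX cX + t' -> u <= u' -> nd cs u' - nd cs u < jX.
Proof.
move=> Ht Ht' E E' H.
have := nd_lip cs u u' H. clear -Ht Ht' E E'. lia.
Qed.


Lemma dec_uniq j c t j' c' t' : 1 <= j <= l -> c < 2 -> lo kd j <= t < lo kd j + j ->
  1 <= j' <= l -> c' < 2 -> lo kd j' <= t' < lo kd j' + j' ->
  off l j c + t = off l j' c' + t' -> (j, c) = (j', c').
Proof.
move=> Hj Hc Ht Hj' Hc' Ht' E.
have [_ H1] := tag_enc l j c t kd HkX Hj Hc Ht.
have [_ H2] := tag_enc l j' c' t' kd HkX Hj' Hc' Ht'.
rewrite E H2 in H1. by case: H1 => -> ->.
Qed.

Lemma full_of jY cY K qK : 1 <= jY <= l -> cY < 2 -> queue_at (V l) cs K = Some qK ->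
  (forall t, lo kd' jY <= t < lo kd' jY + jY -> off l jY cY + t \in qK) ->
  full_block l qK kd' (jY, cY).
Proof.
move=> Hj Hc HK Hin. split.
- have [H1 H2] := tag_enc l jY cY (lo kd' jY) kd' HkX' Hj Hc ltac:(clear -Hj; lia).
  by exists (off l jY cY + lo kd' jY).
- move=> i Hi Hn.
  have [_ _ _ [t [Ht ->]]] := tag_dec l i kd' (jY, cY) Hi Hn.
  exact: Hin.
Qed.

Lemma aux j1 cA j2 cB : k <= size (V l) ->
  1 <= j1 <= l -> cA < 2 -> 1 <= j2 <= l -> cB < 2 -> prec j1 cA j2 cB ->
  inq j1 cA -> inq j2 cB ->
  exists k' q', k < k' <= size (V l) /\ queue_at (V l) cs k' = Some q' /\ two_full l q' kd'.
Proof.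
move=> Hkn Hj1 HcA Hj2 HcB Hp HB1 HB2.
have [B1a B1b B1c B1d] := blk j1 cA Hj1 HcA HB1 0 ltac:(clear -Hj1; lia).
have [B1a' B1b' B1c' B1d'] := blk j1 cA Hj1 HcA HB1 j1.-1 ltac:(clear -Hj1; lia).
have [B2a B2b B2c B2d] := blk j2 cB Hj2 HcB HB2 0 ltac:(clear -Hj2; lia).
have [B2a' B2b' B2c' B2d'] := blk j2 cB Hj2 HcB HB2 j2.-1 ltac:(clear -Hj2; lia).
rewrite ?addn0 in B1a B1b B1c B2a B2b B2c.
have Hlo1 := lo_bound kd j1 (lo kd j1 + j1.-1) HkX ltac:(clear -Hj1; lia).
have Hord : st j1 cA + j1.-1 < st j2 cB.
  have := off_order l j1 cA j2 cB (lo kd j1 + j1.-1) Hj1 Hj2 HcA HcB ltac:(clear -Hlo1; lia) Hp.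
  rewrite /st; clear; lia.
have Hab : ne cs (st j1 cA) + j1 <= ne cs (st j2 cB).
  have := ne_lt cs _ _ B1b' Hord. rewrite B1d'. clear -Hj1; lia.
have Hacc := accept_eq (V l) cs _ Hfin.
have Hbn : ne cs (st j2 cB) + j2.-1 < nd cs (size (V l)).
  rewrite Hacc -B2d'. apply: ne_lt => //. clear -B2a' Hkn; lia.
have [ta [Ta1 Ta2 Ta3 Ta4]] := popk (ne cs (st j1 cA)) B1c ltac:(clear -Hab Hbn; lia).
have [ta' [Ta1' Ta2' Ta3' Ta4']] := popk (ne cs (st j1 cA) + j1.-1) ltac:(clear -B1c; lia) ltac:(clear -Hab Hbn Hj1; lia).
have [tb [Tb1 Tb2 Tb3 Tb4]] := popk (ne cs (st j2 cB)) ltac:(clear -B1c Hab; lia) ltac:(clear -Hbn; lia).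
have [tb' [Tb1' Tb2' Tb3' Tb4']] := popk (ne cs (st j2 cB) + j2.-1) ltac:(clear -B1c Hab; lia) Hbn.
have ordp : forall u u', nd cs u < nd cs u' -> u < u'.
  move=> u u' H2. rewrite ltnNge; apply/negP => H.
  have := nd_mono cs u' u H. clear -H2; lia.
have Hta : ta <= ta'.
  case: (ltnP ta' ta) => // H. have := nd_lt cs ta' ta Ta2' H. clear -Ta3 Ta3'; lia.
have Htab : ta' < tb by apply: ordp; clear -Ta3' Tb3 Hab Hj1; lia.
have Htb : tb <= tb'.
  case: (ltnP tb' tb) => // H. have := nd_lt cs tb' tb Tb2' H. clear -Tb3 Tb3'; lia.
have [jA [cA1 [tA [DA1 DA2 DA3 DA4]]]] := symd ta j1 cA Hj1 HcA HB1 Ta1 Ta2 ltac:(clear -Ta3 Hj1; lia).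
have [jA' [cA1' [tA' [DA1' DA2' DA3' DA4']]]] := symd ta' j1 cA Hj1 HcA HB1 Ta1' Ta2' ltac:(clear -Ta3' Hj1; lia).
have [jB [cB1 [tB [DB1 DB2 DB3 DB4]]]] := symd tb j2 cB Hj2 HcB HB2 Tb1 Tb2 ltac:(clear -Tb3 Hj2; lia).
have [jB' [cB1' [tB' [DB1' DB2' DB3' DB4']]]] := symd tb' j2 cB Hj2 HcB HB2 Tb1' Tb2' ltac:(clear -Tb3' Hj2; lia).
have PA := after j2 cB Hj2 HcB HB2 jA cA1 tA DA1 DA2 DA3 ltac:(rewrite -DA4; exact Ta4).
have PB := after j2 cB Hj2 HcB HB2 jB cB1 tB DB1 DB2 DB3 ltac:(rewrite -DB4; exact Tb4).
have N1 : (jA, cA1) <> (jA', cA1').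
  move=> [E1 E2]; subst jA' cA1'.
  have := same_block jA cA1 tA tA' ta ta' DA3 DA3' DA4 DA4' Hta.
  rewrite Ta3 Ta3'. move: Hp PA; rewrite /prec. clear -HcA HcB DA2 Hj1; lia.
have N2 : (jB, cB1) <> (jB', cB1').
  move=> [E1 E2]; subst jB' cB1'.
  have [E|NE] := eqVneq (jA, cA1) (jB, cB1).
  - case: E => E1 E2; subst jA cA1.
    have := same_block jB cB1 tA tB' ta tb' DA3 DB3' DA4 DB4' ltac:(clear -Hta Htab Htb; lia).
    rewrite Ta3 Tb3'. clear -Hab Hj1 Hj2 PB DB2 HcB; move: PB; rewrite /prec; lia.
  - have [_ HtA2] := lo_bound kd jA tA HkX DA3.
    have [_ HtB2] := lo_bound kd jB tB HkX DB3.
    have := pos_cmp l jA cA1 tA jB cB1 tB DA1 DB1 DA2 DB2 HtA2 HtB2 (elimN eqP NE)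
      ltac:(rewrite -DA4 -DB4; clear -Hta Htab; lia).
    have := same_block jB cB1 tB tB' tb tb' DB3 DB3' DB4 DB4' Htb.
    rewrite Tb3 Tb3'.
    move: PA PB; rewrite /prec. clear -HcA HcB DA2 DB2 Hj1 Hj2; lia.
have Hta2 : ta < ta'.
  rewrite ltn_neqAle Hta andbT; apply/eqP => E.
  apply: N1. apply: (dec_uniq _ _ tA _ _ tA') => //. by rewrite -DA4 -DA4'.
have Htb2 : tb < tb'.
  rewrite ltn_neqAle Htb andbT; apply/eqP => E.
  apply: N2. apply: (dec_uniq _ _ tB _ _ tB') => //. by rewrite -DB4 -DB4'.
have [jY1 [cY1 [Y1a Y1b Y1c]]] := between l kd kd' jA cA1 tA jA' cA1' tA' Ho DA1 DA2 DA3 DA1' DA2' DA3' N1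
  ltac:(rewrite -DA4 -DA4'; exact Hta2).
have [jY2 [cY2 [Y2a Y2b Y2c]]] := between l kd kd' jB cB1 tB jB' cB1' tB' Ho DB1 DB2 DB3 DB1' DB2' DB3' N2
  ltac:(rewrite -DB4 -DB4'; exact Htb2).
rewrite -DA4 -DA4' in Y1c. rewrite -DB4 -DB4' in Y2c.
have [qK HqK] := queue_some (V l) cs tb' (size (V l)) (ltnW Tb1') Hfin.
have memK : forall u, u < size (V l) -> pu cs u -> st j2 cB + j2.-1 < u -> u < tb' -> u \in qK.
  move=> u Hu Hpu H1 H2. apply/(queue_mem (V l) cs tb' qK u HqK). split => //.
  rewrite Tb3' -B2d'. apply: ltnW. exact: ne_lt.
exists tb', qK. split; first by apply/andP; split; [clear -Ta4 Hta Htab Htb; lia|exact: ltnW].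
split => //.
have inY1 : forall t, lo kd' jY1 <= t < lo kd' jY1 + jY1 -> off l jY1 cY1 + t \in qK.
  move=> t Ht. have [S1 S2] := sym_enc l jY1 cY1 t kd' HkX' Y1a Y1b Ht.
  have := Y1c t Ht => Hr.
  apply: memK => //.
  - apply: (push_between j1 cA ta ta') => //; by [rewrite Ta3 | rewrite Ta3' | clear -Hr; lia].
  - clear -Hr Ta4 B2a'; lia.
  - clear -Hr Htab Htb; lia.
have inY2 : forall t, lo kd' jY2 <= t < lo kd' jY2 + jY2 -> off l jY2 cY2 + t \in qK.
  move=> t Ht. have [S1 S2] := sym_enc l jY2 cY2 t kd' HkX' Y2a Y2b Ht.
  have := Y2c t Ht => Hr.
  apply: memK => //.
  - apply: (push_between j2 cB tb tb') => //; by [rewrite Tb3 | rewrite Tb3' | clear -Hr; lia].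
  - clear -Hr Tb4 B2a'; lia.
  - clear -Hr; lia.
exists (jY1, cY1), (jY2, cY2). split; last split.
- move=> [E1 E2]; subst jY2 cY2.
  have := Y1c (lo kd' jY1) ltac:(clear -Y1a; lia).
  have := Y2c (lo kd' jY1) ltac:(clear -Y1a; lia).
  clear -Htab; lia.
- exact: (full_of jY1 cY1 tb' qK Y1a Y1b HqK inY1).
- exact: (full_of jY2 cY2 tb' qK Y2a Y2b HqK inY2).
Qed.

End Main.

Theorem lemma12 (l : nat) (cs : seq bool) (kind kind' : sym) :
  1 <= l ->
  accepting (V l) cs ->
  (kind, kind') = (sx, sy) \/ (kind, kind') = (sy, sx) ->
  forall (k : nat) (q : seq nat),
    k <= size (V l) ->
    queue_at (V l) cs k = Some q ->
    two_full l q kind ->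
    exists (k' : nat) (q' : seq nat),
      k < k' <= size (V l) /\ queue_at (V l) cs k' = Some q' /\
      two_full l q' kind'.
Proof.
move=> Hl [Hsz Hfin] Ho k q Hkn Hq [b1 [b2 [Hne [F1 F2]]]].
have blockof : forall b, full_block l q kind b ->
  [/\ 1 <= b.1 <= l, b.2 < 2 & inq l kind q b.1 b.2].
  move=> b [[i [Hi Hn]] Hall].
  have [HkX _ _ _] := tag_dec l i kind b Hi Hn.
  have [_ H1 H2 _] := tag_dec l i kind b Hi Hn.
  split => // t Ht.
  have [G1 G2] := tag_enc l b.1 b.2 t kind HkX H1 H2 Ht.
  apply: Hall => //. by rewrite G2; case: (b).
case: b1 Hne F1 F2 => j1 cA; case: b2 => j2 cB Hne F1 F2.
have [Hj1 HcA HB1] := blockof _ F1.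
have [Hj2 HcB HB2] := blockof _ F2.
rewrite /= in Hj1 HcA HB1 Hj2 HcB HB2.
have [Hp|Hp] : prec j1 cA j2 cB \/ prec j2 cB j1 cA.
  rewrite /prec. case: (ltngtP j1 j2) => H; [lia|lia|].
  subst j2. case: (ltngtP cA cB) => H'; [lia|lia|]. by subst cB.
- exact: (aux l cs kind kind' k q Ho Hfin Hq j1 cA j2 cB Hkn Hj1 HcA Hj2 HcB Hp HB1 HB2).
- exact: (aux l cs kind kind' k q Ho Hfin Hq j2 cB j1 cA Hkn Hj2 HcB Hj1 HcA Hp HB2 HB1).
Qed.
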